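(* Let $p$ be a prime and let $A^*(\mathbf{Q}_p)$ be the group, under composition, of maps $f(x)=ax+b$ on $\mathbf{Q}_p$ with $a\in\mathbf{Q}_p\setminus\{0\}$, $b\in\mathbf{Q}_p$, topologized as a subset of $\mathbf{Q}_p\times\mathbf{Q}_p$ via $(a,b)$; let $A^*(\mathbf{Z}_p)$ be the subgroup with $|a|_p=1$, $b\in\mathbf{Z}_p$. For $f\in A^*(\mathbf{Q}_p)$ define $L(f)=\max(|a-1|_p,|b|_p)$. Fix $t\ge1$ and put $L'(f)=L(f)$ if $f\in A^*(\mathbf{Z}_p)$ and $L'(f)=t$ otherwise. Then $L'(f^{-1})=L'(f)$ and $L'(f\circ g)\le\max(L'(f),L'(g))$ for all $f,g\in A^*(\mathbf{Q}_p)$, and $L'(g^{-1}\circ f)$ is a left-invariant ultrametric on $A^*(\mathbf{Q}_p)$ determining its usual topology; for $f,g\in A^*(\mathbf{Z}_p)$ it equals $\max(|a-c|_p,|b-d|_p)$ where $g(x)=cx+d$.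
   Context: $|\cdot|_p$ is the $p$-adic absolute value and $\mathbf{Z}_p$ the $p$-adic integers. *)

(* Defs.v *)
From HB Require Import structures.
From mathcomp Require Import all_boot all_order all_algebra.
From mathcomp Require Import boolp reals.
Set Implicit Arguments. Unset Strict Implicit. Unset Printing Implicit Defensive.
Import Order.TTheory GRing.Theory Num.Theory.
Local Open Scope ring_scope.

Section Padic.
Variables (p : nat) (R : realType).

Definition vp_rat (q : rat) : int :=
  (logn p `|numq q|%N)%:Z - (logn p `|denq q|%N)%:Z.

Definition padic_abs (q : rat) : R :=
  if q == 0 then 0 else (p%:R : R) ^ (- vp_rat q).
End Padic.

(* (K, absK) is the field Q_p with its p-adic absolute value:
   the completion of (Q, |.|_p), i.e. a complete valued field whose
   absolute value extends |.|_p on Q and in which Q is dense.  *)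
Definition is_Qp (p : nat) (R : realType) (K : fieldType) (absK : K -> R) : Prop :=
  [/\ ((forall x, 0 <= absK x) /\ (forall x, absK x = 0 <-> x = 0) /\
       (forall x y, absK (x * y) = absK x * absK y)),
      (forall x y, absK (x + y) <= Num.max (absK x) (absK y)),
      (forall q : rat, absK (ratr q) = padic_abs p R q),
      (forall x (e : R), 0 < e -> exists q : rat, absK (x - ratr q) < e)
    & (forall u : nat -> K,
         (forall e : R, 0 < e -> exists N, forall m n, (N <= m)%N -> (N <= n)%N ->
              absK (u m - u n) < e) ->
         exists l, forall e : R, 0 < e -> exists N, forall n, (N <= n)%N ->
              absK (u n - l) < e)].

Section Affine.
Variables (R : realType) (K : fieldType) (absK : K -> R).

(* f = (a, b) represents x |-> a x + b *)
Definition inAQ (f : K * K) : Prop := f.1 != 0.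
Definition inAZ (f : K * K) : Prop := absK f.1 = 1 /\ absK f.2 <= 1.

(* (f o g)(x) = a (c x + d) + b *)
Definition acomp (f g : K * K) : K * K := (f.1 * g.1, f.1 * g.2 + f.2).
Definition ainv (f : K * K) : K * K := (f.1^-1, - (f.2 / f.1)).

Definition Lfun (f : K * K) : R := Num.max (absK (f.1 - 1)) (absK f.2).

Definition L' (t : R) (f : K * K) : R :=
  if `[< inAZ f >] then Lfun f else t.
End Affine.

Definition adist (R : realType) (K : fieldType) (absK : K -> R) (t : R)
  (f g : K * K) : R := L' absK t (acomp (ainv g) f).

(* Main.v *)
Require Import Defs.
From HB Require Import structures.
From mathcomp Require Import all_boot all_order all_algebra.
From mathcomp Require Import boolp reals.
From mathcomp Require Import ring lra.
Import Order.TTheory GRing.Theory Num.Theory.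
Local Open Scope ring_scope.

Section Aux.
Variables (R : realType) (K : fieldType) (absK : K -> R).
Hypotheses (ab0 : forall x, 0 <= absK x) (abE : forall x, absK x = 0 <-> x = 0)
  (abM : forall x y, absK (x * y) = absK x * absK y)
  (abU : forall x y, absK (x + y) <= Num.max (absK x) (absK y)).

Lemma ab00 : absK 0 = 0. Proof. by apply/abE. Qed.

Lemma abne x : x != 0 -> 0 < absK x.
Proof.
move=> /eqP nx; rewrite lt_def ab0 andbT; apply/eqP => /abE; exact nx.
Qed.

Lemma ab1 : absK 1 = 1.
Proof.
have h := abM 1 1; rewrite mulr1 in h.
have n : absK 1 != 0 by apply/eqP => /abE /eqP; rewrite oner_eq0.
by apply: (mulfI n); rewrite -h mulr1.
Qed.

Lemma abN x : absK (- x) = absK x.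
Proof.
have h : absK (-1) = 1.
  have e := abM (-1) (-1); rewrite mulrNN mulr1 ab1 in e.
  have p0 := ab0 (-1).
  apply/eqP; rewrite eq_le; apply/andP; split; nra.
by rewrite -mulN1r abM h mul1r.
Qed.

Lemma abBC x y : absK (x - y) = absK (y - x).
Proof. by rewrite -abN opprB. Qed.

Lemma abV x : absK (x^-1) = (absK x)^-1.
Proof.
have [->|nx] := eqVneq x 0; first by rewrite invr0 ab00 invr0.
have : absK x * absK x^-1 = 1 by rewrite -abM mulfV // ab1.
move=> e; have n : absK x != 0 by rewrite gt_eqF // abne.
by apply: (mulfI n); rewrite e mulfV.
Qed.

Lemma abDiv x y : absK (x / y) = absK x / absK y.
Proof. by rewrite abM abV. Qed.

Lemma abU' x y c : absK x <= c -> absK y <= c -> absK (x + y) <= c.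
Proof. move=> hx hy; apply: le_trans (abU x y) _; by rewrite ge_max hx hy. Qed.

Lemma abB' x y c : absK x <= c -> absK y <= c -> absK (x - y) <= c.
Proof. by move=> hx hy; apply: abU' => //; rewrite abN. Qed.

Lemma abS x y : absK x < absK y -> absK (x + y) = absK y.
Proof.
move=> lt; apply/eqP; rewrite eq_le; apply/andP; split.
  by apply: abU'; [apply: ltW|].
have e : y = (x + y) - x by ring.
have := abU (x + y) (- x); rewrite -e abN.
rewrite le_max => /orP [//|h]; by have := lt_le_trans lt h; rewrite ltxx.
Qed.

Lemma L'_AZ t f : inAZ absK f -> L' absK t f = Lfun absK f.
Proof. by rewrite /L'; case: asboolP. Qed.
Lemma L'_nAZ t f : ~ inAZ absK f -> L' absK t f = t.
Proof. by rewrite /L'; case: asboolP. Qed.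

Lemma Lfun_ge0 f : 0 <= Lfun absK f.
Proof. by rewrite /Lfun le_max ab0. Qed.

Lemma Lfun_le1 f : inAZ absK f -> Lfun absK f <= 1.
Proof.
case=> h1 h2; rewrite /Lfun ge_max h2 andbT.
by apply: abB'; rewrite ?h1 ?ab1.
Qed.

Lemma L'_ge0 t f : 1 <= t -> 0 <= L' absK t f.
Proof.
rewrite /L'; case: asboolP => _ ?; [exact: Lfun_ge0| lra].
Qed.

Lemma inAZ_inv f : inAQ f -> inAZ absK (ainv f) <-> inAZ absK f.
Proof.
rewrite /inAQ /inAZ /ainv /= => nf; rewrite abV abN abDiv.
have pa := abne _ nf.
split => -[h1 h2].
  have e : absK f.1 = 1 by rewrite -[absK f.1]invrK h1 invr1.
  by split=> //; move: h2; rewrite e invr1 mulr1.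
by rewrite h1 invr1 mulr1.
Qed.

Lemma Lfun_inv f : inAQ f -> inAZ absK f -> Lfun absK (ainv f) = Lfun absK f.
Proof.
move=> nf [h1 h2]; rewrite /Lfun /ainv /= abN abDiv h1 divr1.
congr Num.max.
have -> : f.1^-1 - 1 = f.1^-1 * (1 - f.1) by field.
by rewrite abM abV h1 invr1 mul1r abBC.
Qed.

Lemma L'_inv t f : inAQ f -> L' absK t (ainv f) = L' absK t f.
Proof.
move=> nf; have [h|h] := pselect (inAZ absK f).
  rewrite !L'_AZ //; first exact: Lfun_inv.
  by apply/inAZ_inv.
by rewrite !L'_nAZ // => /(inAZ_inv _ nf).
Qed.

Lemma inAZ_comp f g : inAZ absK f -> inAZ absK g -> inAZ absK (acomp f g).
Proof.
move=> [f1 f2] [g1 g2]; rewrite /inAZ /acomp /= abM f1 g1 mul1r; split=> //.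
by apply: abU'; rewrite ?abM ?f1 ?mul1r.
Qed.

Lemma Lfun_comp f g : inAZ absK f -> inAZ absK g ->
  Lfun absK (acomp f g) <= Num.max (Lfun absK f) (Lfun absK g).
Proof.
move=> [f1 f2] [g1 g2]; rewrite /Lfun /acomp /=.
set M := Num.max (Num.max _ _) _.
have hM1 : absK (f.1 - 1) <= M by rewrite /M !le_max lexx.
have hM2 : absK (g.1 - 1) <= M by rewrite /M !le_max lexx !orbT.
have hM3 : absK f.2 <= M by rewrite /M !le_max lexx !orbT.
have hM4 : absK g.2 <= M by rewrite /M !le_max lexx !orbT.
rewrite ge_max; apply/andP; split.
  have -> : f.1 * g.1 - 1 = f.1 * (g.1 - 1) + (f.1 - 1) by ring.
  by apply: abU' => //; rewrite abM f1 mul1r.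
by apply: abU' => //; rewrite abM f1 mul1r.
Qed.

Lemma L'_le_t t f : 1 <= t -> L' absK t f <= t.
Proof.
move=> t1; rewrite /L'; case: asboolP => // h.
by apply: le_trans (Lfun_le1 _ h) t1.
Qed.

Lemma L'_comp t f g : 1 <= t ->
  L' absK t (acomp f g) <= Num.max (L' absK t f) (L' absK t g).
Proof.
move=> t1.
have [hf|hf] := pselect (inAZ absK f); last first.
  by rewrite (L'_nAZ _ _ hf) le_max L'_le_t.
have [hg|hg] := pselect (inAZ absK g); last first.
  by rewrite (L'_nAZ _ _ hg) le_max L'_le_t ?orbT.
rewrite !L'_AZ //; last exact: inAZ_comp.
exact: Lfun_comp.
Qed.

Lemma inAQ_inv (f : K * K) : inAQ f -> inAQ (ainv f).
Proof. by rewrite /inAQ /= invr_eq0. Qed.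
Lemma inAQ_comp (f g : K * K) : inAQ f -> inAQ g -> inAQ (acomp f g).
Proof. by rewrite /inAQ /= => hf hg; rewrite mulf_neq0. Qed.

Lemma id_sym (f g : K * K) : inAQ f -> inAQ g ->
  ainv (acomp (ainv g) f) = acomp (ainv f) g.
Proof.
case: f => a b; case: g => c d; rewrite /inAQ /acomp /ainv /= => ha hc.
congr pair; field; by rewrite ?ha ?hc.
Qed.

Lemma id_tri (f g h : K * K) : inAQ g -> inAQ h ->
  acomp (ainv h) f = acomp (acomp (ainv h) g) (acomp (ainv g) f).
Proof.
case: f => a b; case: g => c d; case: h => u v; rewrite /inAQ /acomp /ainv /= => hc hu.
congr pair; field; by rewrite ?hu ?hc.
Qed.

Lemma id_left (f g h : K * K) : inAQ g -> inAQ h ->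
  acomp (ainv (acomp h g)) (acomp h f) = acomp (ainv g) f.
Proof.
case: f => a b; case: g => c d; case: h => u v; rewrite /inAQ /acomp /ainv /= => hc hu.
congr pair; field; by rewrite ?hu ?hc.
Qed.

Lemma id_rec (f g : K * K) : inAQ g -> f = acomp g (acomp (ainv g) f).
Proof.
case: f => a b; case: g => c d; rewrite /inAQ /acomp /ainv /= => hc.
congr pair; field; by rewrite ?hc.
Qed.


Lemma comp_eq (f g : K * K) :
  acomp (ainv g) f = (g.1^-1 * f.1, g.1^-1 * f.2 + - (g.2 / g.1)).
Proof. by []. Qed.

Lemma dist0 t f g : 1 <= t -> inAQ f -> inAQ g -> adist absK t f g = 0 <-> f = g.
Proof.
move=> t1 nf ng; have nf' := nf; have ng' := ng; move: nf' ng'; rewrite /inAQ => nf' ng'.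
rewrite /adist; split; last first.
  move=> <-; rewrite L'_AZ.
    rewrite /Lfun comp_eq /= mulVf // subrr ab00 [f.2 / f.1]mulrC subrr ab00.
    by rewrite maxxx.
  rewrite /inAZ comp_eq /= mulVf // [f.2 / f.1]mulrC subrr ab00 ab1; split=> //; lra.
rewrite /L'; case: asboolP => h; last by move=> e; rewrite e ler10 in t1.
rewrite /Lfun => e.
have h1 : absK ((acomp (ainv g) f).1 - 1) = 0.
  apply/eqP; rewrite eq_le ab0 andbT -e le_max lexx //.
have h2 : absK ((acomp (ainv g) f).2) = 0.
  apply/eqP; rewrite eq_le ab0 andbT -e le_max lexx orbT //.
move/abE: h1 => /eqP; rewrite subr_eq0 => /eqP h1.
move/abE: h2 => h2.
rewrite (id_rec f g ng); move: h1 h2; case: (acomp (ainv g) f) => x y /= -> ->.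
by rewrite /acomp /= mulr1 mulr0 add0r; case: (g).
Qed.


Lemma topo1 t f (e0 : R) : 1 <= t -> inAQ f -> 0 < e0 ->
  exists2 e : R, 0 < e & forall g, inAQ g -> adist absK t f g < e ->
    absK (g.1 - f.1) < e0 /\ absK (g.2 - f.2) < e0.
Proof.
move=> t1 nf e0p; have nf' := nf; rewrite /inAQ in nf'.
have pa := abne _ nf'.
exists (Num.min 1 (e0 / absK f.1)); first by rewrite lt_min ltr01 divr_gt0.
move=> g ng; have ng' := ng; rewrite /inAQ in ng'.
rewrite lt_min => /andP [hl1 hl2].
have [hz|hz] := pselect (inAZ absK (acomp (ainv g) f)); last first.
  rewrite /adist (L'_nAZ _ _ hz) in hl1.
  by have := lt_le_trans hl1 t1; rewrite ltxx.
rewrite /adist (L'_AZ _ _ hz) /Lfun gt_max in hl2.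
case/andP: hl2 => hx1 hx2.
case: hz => hz1 _.
have ea : absK g.1 = absK f.1.
  have : absK g.1 = absK g.1 * (absK g.1^-1 * absK f.1).
    by rewrite -abM hz1 mulr1.
  by rewrite mulrA -abM mulfV // ab1 mul1r.
rewrite ltr_pdivlMr // in hx1; rewrite ltr_pdivlMr // in hx2.
split.
  have -> : g.1 - f.1 = - (g.1 * ((acomp (ainv g) f).1 - 1)).
    rewrite /acomp /ainv /=; field; done.
  by rewrite abN abM ea mulrC.
have -> : g.2 - f.2 = - (g.1 * ((acomp (ainv g) f).2)).
  rewrite /acomp /ainv /=; field; done.
by rewrite abN abM ea mulrC.
Qed.

Lemma topo2 t f (e : R) : inAQ f -> 0 < e ->
  exists2 e0 : R, 0 < e0 & forall g, inAQ g ->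
    absK (g.1 - f.1) < e0 -> absK (g.2 - f.2) < e0 -> adist absK t f g < e.
Proof.
move=> nf ep; have nf' := nf; rewrite /inAQ in nf'.
have pa := abne _ nf'.
set m := Num.min 1 e.
have m0 : 0 < m by rewrite lt_min ltr01 ep.
have m1 : m <= 1 by rewrite ge_min lexx.
have me : m <= e by rewrite ge_min lexx orbT.
exists (absK f.1 * m); first by rewrite mulr_gt0.
move=> g ng h1 h2; have ng' := ng; rewrite /inAQ in ng'.
have h1' : absK (g.1 - f.1) < absK f.1.
  apply: (lt_le_trans h1); rewrite -[leRHS]mulr1; by rewrite ler_pM2l.
have ea : absK g.1 = absK f.1.
  have -> : g.1 = (g.1 - f.1) + f.1 by ring.
  exact: abS.
have X1 : absK ((acomp (ainv g) f).1 - 1) < m.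
  have -> : (acomp (ainv g) f).1 - 1 = - ((g.1 - f.1) / g.1).
    rewrite /acomp /ainv /=; field; done.
  by rewrite abN abDiv ea ltr_pdivrMr // mulrC.
have X2 : absK ((acomp (ainv g) f).2) < m.
  have -> : (acomp (ainv g) f).2 = - ((g.2 - f.2) / g.1).
    rewrite /acomp /ainv /=; field; done.
  by rewrite abN abDiv ea ltr_pdivrMr // mulrC.
have hz : inAZ absK (acomp (ainv g) f).
  split; last exact: ltW (lt_le_trans X2 m1).
  by rewrite /acomp /= abM abV ea mulVf // gt_eqF.
rewrite /adist (L'_AZ _ _ hz) /Lfun gt_max.
by rewrite (lt_le_trans X1 me) (lt_le_trans X2 me).
Qed.

Lemma distAZ t f g : inAZ absK f -> inAZ absK g ->
  adist absK t f g = Num.max (absK (f.1 - g.1)) (absK (f.2 - g.2)).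
Proof.
move=> [f1 f2] [g1 g2].
have ng' : g.1 != 0.
  by apply/eqP => e; move: g1; rewrite e ab00 => /eqP; rewrite eq_sym oner_eq0.
have e1 : (acomp (ainv g) f).1 - 1 = (f.1 - g.1) / g.1.
  rewrite /acomp /ainv /=; field; done.
have e2 : (acomp (ainv g) f).2 = (f.2 - g.2) / g.1.
  rewrite /acomp /ainv /=; field; done.
have hz : inAZ absK (acomp (ainv g) f).
  split; first by rewrite /acomp /= abM abV f1 g1 invr1 mulr1.
  by rewrite e2 abDiv g1 divr1; apply: abB'.
by rewrite /adist (L'_AZ _ _ hz) /Lfun e1 e2 !abDiv g1 !divr1.
Qed.


Lemma main_sec (t : R) : 1 <= t ->
  [/\ (forall f, inAQ f -> L' absK t (ainv f) = L' absK t f),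
      (forall f g, inAQ f -> inAQ g ->
         L' absK t (acomp f g) <= Num.max (L' absK t f) (L' absK t g)),
      [/\ (forall f g, inAQ f -> inAQ g -> 0 <= adist absK t f g),
          (forall f g, inAQ f -> inAQ g -> adist absK t f g = 0 <-> f = g),
          (forall f g, inAQ f -> inAQ g -> adist absK t f g = adist absK t g f),
          (forall f g h, inAQ f -> inAQ g -> inAQ h ->
             adist absK t f h <= Num.max (adist absK t f g) (adist absK t g h))
        & (forall f g h, inAQ f -> inAQ g -> inAQ h ->
             adist absK t (acomp h f) (acomp h g) = adist absK t f g)],
      (forall U : K * K -> Prop, (forall f, U f -> inAQ f) ->
         ((forall f, U f -> exists2 e : R, 0 < e &
             forall g, inAQ g -> absK (g.1 - f.1) < e -> absK (g.2 - f.2) < e -> U g)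
          <->
          (forall f, U f -> exists2 e : R, 0 < e &
             forall g, inAQ g -> adist absK t f g < e -> U g)))
    & (forall f g, inAZ absK f -> inAZ absK g ->
         adist absK t f g = Num.max (absK (f.1 - g.1)) (absK (f.2 - g.2)))].
Proof.
move=> t1; split.
- exact: L'_inv.
- by move=> f g _ _; exact: L'_comp.
- split.
  + by move=> f g _ _; exact: L'_ge0.
  + by move=> f g nf ng; exact: dist0.
  + move=> f g nf ng; rewrite /adist -L'_inv; last by apply: inAQ_comp => //; apply: inAQ_inv.
    by rewrite id_sym.
  + move=> f g h nf ng nh; rewrite maxC /adist (id_tri f g h ng nh).
    exact: L'_comp.
  + by move=> f g h nf ng nh; rewrite /adist id_left.
- move=> U UA; split => H f Uf.
  + have [e0 e0p He0] := H f Uf.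
    have [e ep He] := topo1 t f e0 t1 (UA f Uf) e0p.
    exists e => // g ng hd; have [h1 h2] := He g ng hd; exact: He0.
  + have [e ep He] := H f Uf.
    have [e0 e0p He0] := topo2 t f e (UA f Uf) ep.
    exists e0 => // g ng h1 h2; apply: He => //; exact: He0.
- by move=> f g; exact: distAZ.
Qed.

End Aux.

Theorem mainTheorem13 (p : nat) (R : realType) (K : fieldType) (absK : K -> R)
  (t : R) :
  prime p -> is_Qp p absK -> 1 <= t ->
  [/\ (* L'(f^{-1}) = L'(f) *)
      (forall f, inAQ f -> L' absK t (ainv f) = L' absK t f),
      (* L'(f o g) <= max(L'(f), L'(g)) *)
      (forall f g, inAQ f -> inAQ g ->
         L' absK t (acomp f g) <= Num.max (L' absK t f) (L' absK t g)),
      (* d(f,g) = L'(g^{-1} o f) is a left-invariant ultrametric *)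
      [/\ (forall f g, inAQ f -> inAQ g -> 0 <= adist absK t f g),
          (forall f g, inAQ f -> inAQ g -> adist absK t f g = 0 <-> f = g),
          (forall f g, inAQ f -> inAQ g -> adist absK t f g = adist absK t g f),
          (forall f g h, inAQ f -> inAQ g -> inAQ h ->
             adist absK t f h <= Num.max (adist absK t f g) (adist absK t g h))
        & (forall f g h, inAQ f -> inAQ g -> inAQ h ->
             adist absK t (acomp h f) (acomp h g) = adist absK t f g)],
      (* d determines the usual (subspace of Q_p x Q_p) topology *)
      (forall U : K * K -> Prop, (forall f, U f -> inAQ f) ->
         ((forall f, U f -> exists2 e : R, 0 < e &
             forall g, inAQ g -> absK (g.1 - f.1) < e -> absK (g.2 - f.2) < e -> U g)
          <->
          (forall f, U f -> exists2 e : R, 0 < e &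
             forall g, inAQ g -> adist absK t f g < e -> U g)))
    & (* on A*(Z_p): d(f,g) = max(|a-c|_p, |b-d|_p) *)
      (forall f g, inAZ absK f -> inAZ absK g ->
         adist absK t f g = Num.max (absK (f.1 - g.1)) (absK (f.2 - g.2)))].
Proof.
move=> _ [[ab0 [abE abM]] abU _ _ _] t1.
exact: (@main_sec R K absK ab0 abE abM abU t t1).
Qed.
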